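(* Let $\varepsilon>0$ be a constant, let $C=12/\varepsilon$, and let $G=(V,E)$ be a graph on $n$ vertices with $\delta(G)\geq\left(\frac12+\varepsilon\right)n$. Then, for all sufficiently large $n$, there exists a set $L\subseteq V$ with $|L|\leq C\log n$ such that every pair of distinct vertices $u,v\in V\setminus L$ has at least $12\log n$ common $G$-neighbors in $L$.
   Context: $\log$ denotes the natural logarithm. *)

(* Defs.v *)
From mathcomp Require Export all_boot.
From Stdlib Require Export Reals.
Set Implicit Arguments.
Unset Strict Implicit.
Unset Printing Implicit Defensive.

Definition simple_graph (T : finType) (e : rel T) : Prop :=
  symmetric e /\ irreflexive e.

Definition nbhd (T : finType) (e : rel T) (v : T) : {set T} := [set w | e v w].

Definition common_nbrs_in (T : finType) (e : rel T) (L : {set T}) (u v : T)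
  : {set T} := [set w in L | e u w && e v w].
Arguments simple_graph {T} e.
Arguments nbhd {T} e v.
Arguments common_nbrs_in {T} e L u v.

(* Main.v *)
Require Import Defs.
From Stdlib Require Import Lia Lra Psatz ZArith.
From mathcomp Require Import all_boot.
From mathcomp Require Import zify.
Section Comb.
Variables (T : finType) (e : rel T).
Local Open Scope nat_scope.

Definition cov (L : {set T}) (u v : T) := #|common_nbrs_in e L u v|.

Lemma cov_add (L : {set T}) (w u v : T) : w \notin L ->
  cov (w |: L) u v = cov L u v + (e u w && e v w).
Proof.
move=> wL; rewrite /cov.
case b: (e u w && e v w).
- have -> : common_nbrs_in e (w |: L) u v = w |: common_nbrs_in e L u v.
    by apply/setP => x; rewrite !inE; case: eqP => [->|]; rewrite ?b ?eqxx.
  by rewrite cardsU1 !inE (negbTE wL) addnC.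
- have -> : common_nbrs_in e (w |: L) u v = common_nbrs_in e L u v.
    by apply/setP => x; rewrite !inE; case: eqP => [->|] //=; rewrite b (negbTE wL).
  by rewrite addn0.
Qed.

Lemma pow_id K c (b : bool) : c < K -> 2 * 2 ^ (K - (c + b)) = 2 ^ (K - c) * (2 - b).
Proof.
move=> cK; case: b; last by rewrite addn0 mulnC.
rewrite addn1 subnS; have h : 0 < K - c by rewrite subn_gt0.
rewrite -{2}(prednK h) expnS; have -> : 2 - true = 1 by []; by rewrite muln1.
Qed.

Lemma sum_bool (A : {set T}) (P : pred T) :
  \sum_(w in A) (P w : nat) = #|[set w in A | P w]|.
Proof.
rewrite -sum1_card [RHS]big_mkcond [LHS]big_mkcond /=; apply: eq_bigr => i _.
by rewrite !inE; case: (i \in A); case: (P i).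
Qed.

Lemma cov_le (L : {set T}) u v : cov L u v <= #|L|.
Proof. by apply: subset_leq_card; apply/subsetP => x; rewrite inE => /andP[]. Qed.

Lemma sum_w K (L : {set T}) u v : #|L| < K ->
  \sum_(w in ~: L) 2 * 2 ^ (K - cov (w |: L) u v) =
  2 ^ (K - cov L u v) * (2 * #|~: L| - #|common_nbrs_in e (~: L) u v|).
Proof.
move=> LK; have cK : cov L u v < K by apply: leq_ltn_trans (cov_le L u v) LK.
rewrite (eq_bigr (fun w => 2 ^ (K - cov L u v) * (2 - (e u w && e v w)))); last first.
  by move=> w; rewrite inE => wL; rewrite cov_add // pow_id.
rewrite -big_distrr /=; congr (_ * _).
rewrite /common_nbrs_in -sum_bool.
have H : \sum_(w in ~: L) (2 - (e u w && e v w)) + \sum_(w in ~: L) (e u w && e v w : nat)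
   = 2 * #|~: L|.
  rewrite -big_split /= (eq_bigr (fun _ => 2)); last by move=> w _; rewrite subnK //; case: (_ && _).
  by rewrite sum_nat_const mulnC.
by rewrite -H addnK.
Qed.

Definition Phi K (L : {set T}) :=
  \sum_(p : T * T | p.1 != p.2) 2 ^ (K - cov L p.1 p.2).

Lemma step K (L : {set T}) D : #|L| < K -> 0 < #|~: L| ->
  (forall u v, u != v -> D <= #|common_nbrs_in e (~: L) u v|) ->
  exists2 w, w \notin L & 2 * #|~: L| * Phi K (w |: L) <= Phi K L * (2 * #|~: L| - D).
Proof.
move=> LK /card_gt0P [w0 w0L] HD.
case: (@arg_minnP _ w0 (fun w => w \in ~: L) (fun w => Phi K (w |: L)) w0L).
move=> wm wmL wmin; exists wm; first by move: wmL; rewrite inE.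
apply: (@leq_trans (2 * \sum_(w in ~: L) Phi K (w |: L))).
  rewrite -mulnA leq_mul2l; apply/orP; right.
  rewrite -sum_nat_const; apply: leq_sum => w wL; exact: wmin.
rewrite big_distrr /= /Phi.
under eq_bigr do rewrite big_distrr /=.
rewrite exchange_big /= big_distrl /=.
apply: leq_sum => p pne; rewrite sum_w // leq_mul2l; apply/orP; right.
by apply: leq_sub2l; apply: HD.
Qed.

Lemma Phi_le K (L : {set T}) : Phi K L <= #|T| * #|T| * 2 ^ K.
Proof.
rewrite /Phi big_mkcond /=.
apply: (@leq_trans (\sum_(p : T * T) 2 ^ K)).
  apply: leq_sum => p _; case: (_ != _) => //.
  by apply: leq_pexp2l => //; apply: leq_subr.
by rewrite sum_nat_const card_prod.
Qed.

Lemma Phi_ge K (L : {set T}) {u v} : u != v -> 2 ^ (K - cov L u v) <= Phi K L.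
Proof. by move=> uv; rewrite /Phi (bigD1 (u, v)) //= leq_addr. Qed.


Lemma dp_bound (L : {set T}) u v d0 : (forall x, d0 <= #|nbhd e x|) ->
  2 * d0 - #|T| - #|L| <= #|common_nbrs_in e (~: L) u v|.
Proof.
move=> Hd.
have h1 := cardsUI (nbhd e u) (nbhd e v).
have h2 : #|nbhd e u :|: nbhd e v| <= #|T| by apply: max_card.
have h3 : #|nbhd e u :&: nbhd e v| <= #|common_nbrs_in e (~: L) u v| + #|L|.
  apply: (@leq_trans #|common_nbrs_in e (~: L) u v :|: L|); last by rewrite cardsU leq_subr.
  apply: subset_leq_card; apply/subsetP => x.
  rewrite !inE; case: (x \in L) => //=; by rewrite orbF.
have := Hd u; have := Hd v.
move: h1 h2 h3.
set a := #|nbhd e u :|: nbhd e v|; set b := #|nbhd e u :&: nbhd e v|.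
set c := #|common_nbrs_in e (~: L) u v|.
move=> h1 h2 h3 h4 h5.
lia.
Qed.
End Comb.
Arguments Phi {T}. Arguments cov {T}. Arguments step {T}. Arguments dp_bound {T}.
Arguments Phi_ge {T}. Arguments Phi_le {T}. Arguments cov_le {T}.


Section Real.
Variables (T : finType).
Local Open Scope R_scope.

Lemma INR_subn a b : INR (a - b)%N = if (b <= a)%N then INR a - INR b else 0.
Proof.
case: leqP => h.
  by rewrite -minus_INR //; apply/leP.
by move: (ltnW h); rewrite -subn_eq0 => /eqP ->.
Qed.

Lemma INR_subn_ge a b : INR a - INR b <= INR (a - b)%N.
Proof. rewrite INR_subn; case: leqP => h; first lra.
have := le_INR _ _ (leP (ltnW h)); lra.
Qed.

Lemma INR_muln a b : INR (a * b)%N = INR a * INR b.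
Proof. exact: mult_INR. Qed.

Lemma INR_addn a b : INR (a + b)%N = INR a + INR b.
Proof. exact: plus_INR. Qed.

Lemma INR_exp2 j : INR (2 ^ j)%N = 2 ^ j.
Proof. elim: j => [|j IH]; first by rewrite expn0 /=. 
by rewrite expnS INR_muln IH /=; lra.
Qed.

Lemma INR_leq {a b} : (a <= b)%N -> INR a <= INR b.
Proof. by move=> h; apply: le_INR; apply/leP. Qed.

Lemma INR_ltn {a b} : INR a < INR b -> (a < b)%N.
Proof. by move=> h; apply/ltP; apply: INR_lt. Qed.

Lemma ln2_lt : ln 2 < 78/100.
Proof.
have h1 : 1 + 26/100 < exp (26/100) by apply: exp_ineq1; lra.
have h2 : exp (78/100) = exp (26/100) * exp (26/100) * exp (26/100).
  by rewrite -!exp_plus; congr exp; lra.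
have h3 : 2 < exp (78/100) by rewrite h2; nra.
rewrite -[78/100]ln_exp; apply: ln_increasing => //; lra.
Qed.

Lemma final_ineq eps lnn x kR cR l2 : 0 < eps < 1/2 -> 1 <= lnn -> eps * x = 12 * lnn ->
  x - 1 < kR -> 0 <= cR -> cR < 12 * lnn -> 0 < l2 < 78/100 ->
  0 <= 2 * lnn + kR * (- (99/100) * eps) + cR * l2 -> False.
Proof.
move=> he hl hx hk hc hcl hl2 H.
have h1 : kR * eps > (x - 1) * eps by nra.
have h2 : cR * l2 <= 12 * lnn * (78/100) by nra.
nra.
Qed.

Lemma sub_bound (m D : nat) nR eps q : 0 < eps -> q = 1 - 99/100*eps -> INR m <= nR ->
  99/50*eps*nR <= INR D -> 0 <= q -> INR (2*m - D) <= 2 * INR m * q.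
Proof.
move=> he Eq mn HD q0; rewrite INR_subn; case: leqP => _; last first.
  by have := pos_INR m; nra.
rewrite INR_muln /= Eq.
move: mn HD; have := pos_INR m; move: (INR m) (INR D) => a b; intros; nra.
Qed.

Lemma div_step a b c m q : 0 < m -> 0 <= b -> (1 + 1) * m * a <= b * c -> c <= 2 * m * q -> a <= b * q.
Proof. intros; nra. Qed.

Lemma combine {A P P0 Q N B C} : 0 < B -> 0 < C -> 0 < Q -> A*C = B -> A <= P -> P <= P0*Q -> P0 <= N*B -> 1 <= N*Q*C.
Proof.
move=> hB hC hQ hA h1 h2 h3.
have h4 : P0 * Q <= N * B * Q by apply: Rmult_le_compat_r; lra.
have h5 : A * C <= N * B * Q * C by apply: Rmult_le_compat_r; lra.
have h6 : B * 1 <= B * (N * Q * C).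
  rewrite Rmult_1_r {1}(esym hA); apply: (Rle_trans _ _ _ h5); right; ring.
by apply: (Rmult_le_reg_l B).
Qed.

Lemma iterL K (P : {set T} -> nat) (q : R) : 0 <= q ->
 (forall L : {set T}, (#|L| < K)%N -> exists2 w, w \notin L & INR (P (w |: L)) <= INR (P L) * q) ->
 forall t, (t <= K)%N -> exists L : {set T}, #|L| = t /\ INR (P L) <= INR (P set0) * q ^ t.
Proof.
move=> q0 H; elim=> [|t IH] tK.
  by exists set0; split; [rewrite cards0 | simpl; lra].
have [L [cL HL]] := IH (ltnW tK).
case: (H L); first by rewrite cL.
move=> w wL Hw.
exists (w |: L); split; first by rewrite cardsU1 wL cL.
simpl; apply: Rle_trans Hw _.
have := pos_INR (P set0); have := pos_INR (P L).
have : 0 <= q ^ t by apply: pow_le.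
nra.
Qed.
End Real.

Local Open Scope R_scope.

Ltac lra_ := intros; lra.
Ltac nra_ := intros; nra.

Theorem lemma1 :
  forall eps : R, (0 < eps)%R ->
  exists N : nat, forall n : nat, (N <= n)%N ->
  forall (T : finType) (e : rel T),
    #|T| = n :> nat -> simple_graph e ->
    (forall v : T, ((1/2 + eps) * INR n <= INR #|nbhd e v|)%R) ->
    exists L : {set T},
      (INR #|L| <= (12 / eps) * ln (INR n))%R /\
      (forall u v : T, u != v -> u \notin L -> v \notin L ->
         (12 * ln (INR n) <= INR #|common_nbrs_in e L u v|)%R).
Proof.
move=> eps Heps.
set a := 1200 / (eps * eps).
have Ea : a * (eps * eps) = 1200 by rewrite /a; field; lra_.
have a0 : 0 < a by rewrite /a; apply: Rdiv_lt_0_compat; nra_.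
clearbody a.
exists (Nat.max 8 (Z.to_nat (up (a * a)))).
move=> n /leP HN T e HT Hsg Hdeg.
have n8 : (8 <= n)%N by apply/leP; apply: Nat.le_trans HN; apply: Nat.le_max_l.
have na : a * a < INR n.
  have h := Nat.le_trans _ _ _ (Nat.le_max_r _ _) HN.
  have [u1 _] := archimed (a * a).
  have u0 : (0 <= up (a * a))%Z by apply: le_IZR; nra_.
  have := le_INR _ _ h; rewrite INR_IZR_INZ Z2Nat.id //; lra_.
have nR8 : 8 <= INR n by have := INR_leq n8; rewrite /= ; lra_.
set nR := INR n in Hdeg na nR8 *.
have EnR : nR = INR n by [].
clearbody nR.
set lnn := ln nR.
have Elnn : lnn = ln nR by [].
clearbody lnn.
have lnn1 : 1 <= lnn.
  rewrite Elnn -(ln_exp 1); apply: Rlt_le; apply: ln_increasing; first by apply: exp_pos.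
  have := exp_le_3; lra_.
set s := sqrt nR.
have ss : s * s = nR by apply: sqrt_sqrt; lra_.
have s0 : 0 < s by apply: sqrt_lt_R0; lra_.
clearbody s.
have sa : a <= s.
  case: (Rle_or_lt a s) => // h; exfalso.
  have : s * s < a * a by apply: Rmult_le_0_lt_compat; lra_.
  lra_.
have lns : lnn = 2 * ln s by rewrite Elnn -ss ln_mult //; lra_.
have lns1 : ln s <= s - 1 by have := exp_ineq1_le (ln s); rewrite exp_ln //; lra_.
have es : eps * eps * s >= 1200 by nra_.
have lnbound : lnn <= eps * eps * nR / 600 by rewrite -ss; nra_.
set x := 12 / eps * lnn.
have x0 : 0 <= x by rewrite /x; apply: Rmult_le_pos; [apply: Rlt_le; apply: Rdiv_lt_0_compat|]; lra_.
have ex : eps * x = 12 * lnn by rewrite /x; field; lra_.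
have xle : x <= eps * nR / 50.
  rewrite /x.
  have : 12 / eps * lnn <= 12 / eps * (eps * eps * nR / 600).
    apply: Rmult_le_compat_l => //; apply: Rlt_le; apply: Rdiv_lt_0_compat; lra_.
  have -> : 12 / eps * (eps * eps * nR / 600) = eps * nR / 50 by field; lra_.
  by [].
have [ux1 ux2] := archimed x.
have upos : (1 <= up x)%Z.
  have : (0 < up x)%Z by apply: lt_IZR; lra_.
  lia.
set k := Z.to_nat (up x - 1).
have kR : INR k = IZR (up x) - 1 by rewrite /k INR_IZR_INZ Z2Nat.id ?minus_IZR //; lia.
clearbody k.
have kx : INR k <= x by lra_.
have kx1 : x - 1 < INR k by lra_.
have kn : INR k <= eps * nR / 50 by lra_.
have [v0 _] : exists v0 : T, v0 \in T by apply/card_gt0P; rewrite HT; apply: leq_trans n8.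
have eps12 : eps < 1/2.
  have hv : (#|nbhd e v0| + 1 <= n)%N.
    rewrite -HT addn1; have := max_card (v0 |: nbhd e v0); rewrite cardsU1 !inE.
    by rewrite Hsg.2 add1n.
  have := INR_leq hv; rewrite INR_addn /=; have := Hdeg v0; nra_.
case: (@arg_minnP _ v0 predT (fun w => #|nbhd e w|) isT) => vm _ vmin.
have Hd0 : forall y, (#|nbhd e vm| <= #|nbhd e y|)%N by move=> y; apply: vmin.
have Hd0R : (1/2 + eps) * nR <= INR #|nbhd e vm| by apply: Hdeg.
set q := 1 - 99/100 * eps.
have Eq : q = 1 - 99/100 * eps by [].
clearbody q.
have q0 : 0 < q by lra_.
have [L [cL HL]] : exists L : {set T}, #|L| = k /\ INR (Phi e k L) <= INR (Phi e k set0) * q ^ k.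
  apply: (@iterL T k (Phi e k) q (Rlt_le _ _ q0) _ k (leqnn k)).
  move=> L LK.
  have LKR : INR #|L| < INR k by apply: lt_INR; apply/ltP.
  have m0 : (0 < #|~: L|)%N.
    rewrite cardsCs setCK HT subn_gt0; apply: INR_ltn; nra_.
  have [w wL Hw] := step e k L (2 * #|nbhd e vm| - #|T| - #|L|) LK m0 (fun u v _ => dp_bound e L u v _ Hd0).
  exists w => //.
  have mn : INR #|~: L| <= nR by rewrite EnR -HT; apply: INR_leq; apply: max_card.
  have mR : 0 < INR #|~: L| by apply: lt_0_INR; apply/ltP.
  have HD : 99/50 * eps * nR <= INR (2 * #|nbhd e vm| - #|T| - #|L|).
    have h1 := INR_subn_ge (2 * #|nbhd e vm| - #|T|) #|L|.
    have h2 := INR_subn_ge (2 * #|nbhd e vm|) #|T|.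
    rewrite HT in h1 *; rewrite INR_muln HT -EnR /= in h2.
    nra_.
  have Hsub := @sub_bound #|~: L| (2 * #|nbhd e vm| - #|T| - #|L|) nR eps q Heps Eq mn HD (Rlt_le _ _ q0).
  have := INR_leq Hw; rewrite !INR_muln /= => Hw'.
  exact: (div_step _ _ _ _ _ mR (pos_INR _) Hw' Hsub).
exists L; split; first by rewrite cL; lra_.
move=> u v uv uL vL.
change (12 * lnn <= INR (cov e L u v)).
have ck : (cov e L u v <= k)%N by rewrite -cL; apply: cov_le.
have h1 := INR_leq (@Phi_ge T e k L u v uv).
have h2 := INR_leq (Phi_le e k set0).
have Ec : exists c, c = cov e L u v by eexists.
case: Ec => c Ec; rewrite -Ec in ck h1 *.
rewrite !INR_muln INR_exp2 HT -EnR in h2.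
rewrite INR_exp2 in h1.
have h3 : 2 ^ (k - c)%N * 2 ^ c = 2 ^ k by rewrite -pow_add; congr (_ ^ _); exact: (subnK ck).
have p2 : 0 < 2 ^ k by apply: pow_lt; lra_.
have p2c : 0 < 2 ^ c by apply: pow_lt; lra_.
have pq : 0 < q ^ k by apply: pow_lt.
have H1 : 1 <= nR * nR * q ^ k * 2 ^ c := combine p2 p2c pq h3 h1 HL h2.
case: (Rle_or_lt (12 * lnn) (INR c)) => // hc; exfalso.
have n0 : 0 < nR by lra_.
have Hln : 0 <= 2 * lnn + INR k * ln q + INR c * ln 2.
  have Hl : 0 <= ln (nR * nR * q ^ k * 2 ^ c).
    case: (Rle_lt_or_eq _ _ H1) => h.
      by rewrite -ln_1; apply: Rlt_le; apply: ln_increasing => //; lra.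
    by rewrite -h ln_1; lra.
  have nn : 0 < nR * nR by nra.
  have nnq : 0 < nR * nR * q ^ k by apply: Rmult_lt_0_compat.
  rewrite ln_mult // ln_mult // ln_mult // !ln_pow // in Hl; lra.
have lq : ln q <= q - 1 by have := exp_ineq1_le (ln q); rewrite exp_ln //; lra_.
have := pos_INR k; have := pos_INR c => hc0 hk0.
apply: (final_ineq eps lnn x (INR k) (INR c) (ln 2)) => //.
- split; [have := ln_lt_2; lra_ | exact: ln2_lt].
- have := Rmult_le_compat_l (INR k) _ _ hk0 lq => H.
  have E2 : q - 1 = -(99/100)*eps by lra.
  rewrite E2 in H; lra.
Qed.
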